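(* Fix $k\ge 1$ and a length $T$, and call a binary signal of length $T$ admissible if it contains no more than $k$ consecutive $0$ bits. An admissible signal is minimal if and only if every $1$ bit of the signal is surrounded by at least $k$ $0$ bits, i.e. if a $1$ bit is immediately preceded by exactly $p$ consecutive $0$ bits and immediately succeeded by exactly $q$ consecutive $0$ bits, then $p+q\ge k$.
   Context: Partial order: $\sigma_1\preceq\sigma_2$ if for every $i$ with $\sigma_1(i)=1$ we also have $\sigma_2(i)=1$. An admissible signal $\sigma$ is minimal if there is no other admissible signal $\bar\sigma\neq\sigma$ of the same length with $\bar\sigma\preceq\sigma$. *)

(* Defs.v *)
(* A binary signal of length T is a  s : seq bool  with
   size s = T; bit i (0-based) is  nth false s i  (true = 1, false = 0). *)
From mathcomp Require Import all_boot.
Set Implicit Arguments. Unset Strict Implicit. Unset Printing Implicit Defensive.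

(* s contains no more than k consecutive 0 bits: every window of k+1
   consecutive positions contains a 1 bit. *)
Definition admissible (k : nat) (s : seq bool) : Prop :=
  forall i, i + k < size s -> exists j, i <= j <= i + k /\ nth false s j.

Definition sig_le (s1 s2 : seq bool) : Prop :=
  forall i, i < size s1 -> nth false s1 i -> nth false s2 i.

Definition minimal (k : nat) (s : seq bool) : Prop :=
  admissible k s /\
  forall s', size s' = size s -> admissible k s' -> sig_le s' s -> s' = s.

Definition zeros_before (s : seq bool) (i p : nat) : Prop :=
  p <= i /\ (forall j, i - p <= j < i -> ~~ nth false s j) /\
  (p = i \/ nth false s (i - p - 1)).

Definition zeros_after (s : seq bool) (i q : nat) : Prop :=
  i + q < size s /\ (forall j, i < j <= i + q -> ~~ nth false s j) /\
  (i + q + 1 = size s \/ nth false s (i + q + 1)).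

Definition surrounded (k : nat) (s : seq bool) : Prop :=
  forall i p q, i < size s -> nth false s i ->
    zeros_before s i p -> zeros_after s i q -> k <= p + q.

(* Main.v *)
Require Import Defs.
From mathcomp Require Import all_boot.
From mathcomp Require Import zify.

Lemma max_ex (P : pred nat) m : P 0 -> (forall n, P n -> n <= m) ->
  exists p, P p /\ ~~ P p.+1.
Proof.
move=> P0 hb.
have H : forall t, P t \/ exists p, P p /\ ~~ P p.+1.
  elim=> [|t [IH|IH]]; [by left| |by right].
  case Pt: (P t.+1); [by left|right; exists t; by rewrite Pt].
case: (H m.+1) => // /hb; lia.
Qed.

Lemma zb_ex (s : seq bool) i : exists p, zeros_before s i p.
Proof.
pose P := fun p => (p <= i) && all (fun j => (i - p <= j) ==> ~~ nth false s j) (iota 0 i).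
have [p [/andP [hpi /allP hall] hn]] : exists p, P p /\ ~~ P p.+1.
  apply: (@max_ex P i).
  - rewrite /P /=; apply/allP => j; rewrite mem_iota => /andP [_ hj].
    apply/implyP; lia.
  - by move=> n /andP [].
exists p; split => //; split.
  move=> j hj; have := hall j; rewrite mem_iota => /(_ ltac:(lia)) /implyP; apply; lia.
case: (ltnP p i) => hpi'; last by left; lia.
right; move: hn; rewrite /P hpi' /= => /allPn [j]; rewrite mem_iota => /andP [_ hj].
rewrite negb_imply negbK => /andP [hj2 hs].
have: j = i - p - 1.
  case: (ltnP j (i - p)) => hj3; first lia.
  have := hall j; rewrite mem_iota hj3 /= => /(_ ltac:(lia)); by rewrite hs.
by move=> <-.
Qed.

Lemma za_ex (s : seq bool) i : i < size s -> exists q, zeros_after s i q.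
Proof.
move=> his.
pose P := fun q => (i + q < size s) && all (fun j => (i < j <= i + q) ==> ~~ nth false s j) (iota 0 (size s)).
have [q [/andP [hq /allP hall] hn]] : exists q, P q /\ ~~ P q.+1.
  apply: (@max_ex P (size s)).
  - rewrite /P /= addn0 his /=; apply/allP => j _; apply/implyP; lia.
  - move=> n /andP [h _]; lia.
exists q; split => //; split.
  move=> j hj; have := hall j; rewrite mem_iota => /(_ ltac:(lia)) /implyP; apply; lia.
case: (ltnP (i + q.+1) (size s)) => hq'; last by left; lia.
right; move: hn; rewrite /P hq' /= => /allPn [j]; rewrite mem_iota => /andP [_ hj].
rewrite negb_imply negbK => /andP [hj2 hs].
have: j = i + q + 1.
  case: (ltnP (i + q) j) => hj3; first lia.
  have := hall j; rewrite mem_iota hj /= => /(_ ltac:(lia)).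
  rewrite hs /= implybF => /negP; case; apply/andP; split; lia.
by move=> <-.
Qed.

Theorem mainTheorem7 (k T : nat) (hk : 1 <= k) (s : seq bool)
  (hT : size s = T) (hadm : admissible k s) :
  minimal k s <-> surrounded k s.
Proof.
split.
- move=> [_ hmin] i p q his hsi [hp [hzb hpb]] [hq [hza hqa]].
  rewrite leqNgt; apply/negP => hlt.
  pose s2 := set_nth false s i false.
  have hsz : size s2 = size s by rewrite size_set_nth; apply/maxn_idPr.
  have hn2 : forall j, nth false s2 j = (j != i) && nth false s j.
    by move=> j; rewrite nth_set_nth /= eq_sym; case: eqP.
  have := hmin s2 hsz.
  have hadm2 : admissible k s2.
    move=> a; rewrite hsz => ha.
    case: (hadm a ha) => j [hj hsj].
    case: (eqVneq j i) => hji; last by exists j; rewrite hn2 hji hsj.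
    subst j.
    case: (ltnP a (i - p)) => ha1.
      case: hpb => hpb; first lia.
      exists (i - p - 1); split; first lia.
      by rewrite hn2 hpb andbT; apply/eqP; lia.
    case: hqa => hqa; first lia.
    exists (i + q + 1); split; first lia.
    by rewrite hn2 hqa andbT; apply/eqP; lia.
  have hle : sig_le s2 s by move=> j _; rewrite hn2 => /andP [].
  move=> /(_ hadm2 hle) heq.
  by have := hn2 i; rewrite heq eqxx hsi.
- move=> hsur; split => // s' hsz hadm' hle.
  apply: (@eq_from_nth _ false) => // i hi.
  case hs'i: (nth false s' i); first by rewrite (hle i hi hs'i).
  case hsi: (nth false s i) => //.
  rewrite hsz in hi.
  have [p hzb] := zb_ex s i.
  have [q hza] := @za_ex s i hi.
  have hk' := hsur i p q hi hsi hzb hza.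
  case: hzb => [hp [hzb _]]; case: hza => [hq [hza _]].
  case: (hadm' (i - p)) => [|j [hj hs'j]]; first by rewrite hsz; lia.
  have hsj := hle j ltac:(rewrite hsz; lia) hs'j.
  case: (ltngtP j i) => hji.
  + by move: (hzb j ltac:(lia)); rewrite hsj.
  + by move: (hza j ltac:(lia)); rewrite hsj.
  + by subst j; rewrite hs'i in hs'j.
Qed.
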